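(* Let $(\rho_0,p_0)$ solve the TOV system on $[0,R)$ with regular centre, mass function $m_0$, $g_0=\frac{m_0+4\pi p_0r^3}{r^2[1-2m_0/r]}$, $I_0(r)=\int_0^rg_0$. For real parameters $\Delta p$ and $\delta\rho_c$ define $$\delta p_1(r)=\frac{\Delta p\sqrt{1-2m_0/r}\,e^{-2I_0(r)}}{1+4\pi\Delta p\int_0^r\frac{s\,e^{-2I_0(s)}}{\sqrt{1-2m_0(s)/s}}ds},\qquad g_1(r)=g_0(r)+\frac{4\pi\,\delta p_1(r)\,r}{1-2m_0(r)/r},$$ $$\delta m(r)=\frac{4\pi r^3\,\delta\rho_c}{3[1+rg_1]^2}\exp\Bigl\{2\int_0^rg_1\frac{1-sg_1}{1+sg_1}ds\Bigr\},\qquad \delta p(r)=\delta p_1(r)-\frac{\delta m(r)}{4\pi r^3}\,\frac{1+8\pi[p_0+\delta p_1]r^2}{1-2m_0/r}.$$ Then, on any interval $[0,R')$ on which all denominators are positive and $1-2(m_0+\delta m)/r>0$, the pair $(\rho,p)$ with $m=m_0+\delta m$, $\rho=m'/(4\pi r^2)$, $p=p_0+\delta p$ solves the TOV system with regular centre, with central density $\rho_0(0)+\delta\rho_c$ and central pressure $p_0(0)+\delta p_c$, where $\delta p_c=\Delta p-\delta\rho_c/3$; the two parameters $\Delta p,\delta\rho_c$ are independent. *)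

(* Defs.v *)
From Stdlib Require Import Reals Lra.
From Coquelicot Require Import Coquelicot.
Open Scope R_scope.

Definition mass (rho : R -> R) (r : R) : R :=
  RInt (fun s => 4 * PI * s ^ 2 * rho s) 0 r.

Definition gTOV (m p : R -> R) (r : R) : R :=
  (m r + 4 * PI * p r * r ^ 3) / (r ^ 2 * (1 - 2 * m r / r)).

(* (rho, p) solves the TOV system on [0, R0) with regular centre:
   rho and p are continuous on [0, R0) (right-continuous at the centre,
   so that rho 0 and p 0 are the central density and pressure),
   m = mass rho satisfies 1 - 2 m / r > 0 on (0, R0) and
   p' = -(rho + p) g  on (0, R0). *)
Definition TOV_regular (rho p : R -> R) (R0 : R) : Prop :=
  0 < R0 /\
  filterlim rho (at_right 0) (locally (rho 0)) /\
  filterlim p (at_right 0) (locally (p 0)) /\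
  (forall r, 0 < r < R0 -> continuous rho r /\ continuous p r) /\
  (forall r, 0 < r < R0 -> 0 < 1 - 2 * mass rho r / r) /\
  (forall r, 0 < r < R0 ->
     is_derive p r (- (rho r + p r) * gTOV (mass rho) p r)).

Section Pert.
Variables (rho0 p0 : R -> R) (Dp drhoc : R).

Definition m0 := mass rho0.
Definition g0 := gTOV m0 p0.
Definition I0 (r : R) : R := RInt g0 0 r.

Definition dp1 (r : R) : R :=
  Dp * sqrt (1 - 2 * m0 r / r) * exp (- 2 * I0 r) /
  (1 + 4 * PI * Dp *
     RInt (fun s => s * exp (- 2 * I0 s) / sqrt (1 - 2 * m0 s / s)) 0 r).

Definition g1 (r : R) : R :=
  g0 r + 4 * PI * dp1 r * r / (1 - 2 * m0 r / r).

Definition dm (r : R) : R :=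
  4 * PI * r ^ 3 * drhoc / (3 * (1 + r * g1 r) ^ 2) *
  exp (2 * RInt (fun s => g1 s * (1 - s * g1 s) / (1 + s * g1 s)) 0 r).

Definition dp (r : R) : R :=
  dp1 r - dm r / (4 * PI * r ^ 3) *
          ((1 + 8 * PI * (p0 r + dp1 r) * r ^ 2) / (1 - 2 * m0 r / r)).
End Pert.

(* Main.v *)
Require Import Defs.
From Stdlib Require Import Reals Lra.
From Coquelicot Require Import Coquelicot.
Open Scope R_scope.

Section LimTools.
Context {F : (R -> Prop) -> Prop} {FF : Filter F}.

Lemma L_eq (f : R -> R) (l l' : R) :
  filterlim f F (locally l) -> l = l' -> filterlim f F (locally l').
Proof. intros H ->; exact H. Qed.

Lemma L_plus (f g : R -> R) (a b : R) :
  filterlim f F (locally a) -> filterlim g F (locally b) ->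
  filterlim (fun x => f x + g x) F (locally (a + b)).
Proof.
intros Hf Hg.
apply (filterlim_comp_2 f g Rplus Hf Hg).
apply (@filterlim_plus R_AbsRing R_NormedModule a b).
Qed.

Lemma L_mult (f g : R -> R) (a b : R) :
  filterlim f F (locally a) -> filterlim g F (locally b) ->
  filterlim (fun x => f x * g x) F (locally (a * b)).
Proof.
intros Hf Hg.
apply (filterlim_comp_2 f g Rmult Hf Hg).
apply (@filterlim_mult R_AbsRing a b).
Qed.

Lemma L_cont (f : R -> R) (h : R -> R) (a : R) :
  filterlim f F (locally a) -> continuous h a ->
  filterlim (fun x => h (f x)) F (locally (h a)).
Proof. intros Hf Hh. exact (filterlim_comp _ _ _ f h _ _ _ Hf Hh). Qed.

Lemma L_opp (f : R -> R) (a : R) :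
  filterlim f F (locally a) -> filterlim (fun x => - f x) F (locally (- a)).
Proof.
intros Hf. apply (L_cont f Ropp a Hf).
apply (continuous_opp (fun x : R => x)). apply continuous_id.
Qed.

Lemma L_minus (f g : R -> R) (a b : R) :
  filterlim f F (locally a) -> filterlim g F (locally b) ->
  filterlim (fun x => f x - g x) F (locally (a - b)).
Proof. intros Hf Hg. apply (L_plus f (fun x => - g x)); auto. now apply L_opp. Qed.

Lemma L_inv (f : R -> R) (a : R) :
  filterlim f F (locally a) -> a <> 0 -> filterlim (fun x => / f x) F (locally (/ a)).
Proof. intros Hf Ha. apply (L_cont f Rinv a Hf). now apply continuous_Rinv. Qed.

Lemma L_div (f g : R -> R) (a b : R) :
  filterlim f F (locally a) -> filterlim g F (locally b) -> b <> 0 ->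
  filterlim (fun x => f x / g x) F (locally (a / b)).
Proof. intros Hf Hg Hb. apply (L_mult f (fun x => / g x)); auto. now apply L_inv. Qed.

Lemma L_exp (f : R -> R) (a : R) :
  filterlim f F (locally a) -> filterlim (fun x => exp (f x)) F (locally (exp a)).
Proof. intros Hf. apply (L_cont f exp a Hf). apply continuous_exp. Qed.

Lemma L_sqrt (f : R -> R) (a : R) :
  filterlim f F (locally a) -> filterlim (fun x => sqrt (f x)) F (locally (sqrt a)).
Proof. intros Hf. apply (L_cont f sqrt a Hf). apply continuous_sqrt. Qed.

Lemma L_pow (f : R -> R) (a : R) (n : nat) :
  filterlim f F (locally a) -> filterlim (fun x => f x ^ n) F (locally (a ^ n)).
Proof.
intros Hf. induction n as [|n IH].
- simpl. apply filterlim_const.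
- simpl. apply L_mult; auto.
Qed.

Lemma L_const (c : R) : filterlim (fun _ => c) F (locally c).
Proof. apply filterlim_const. Qed.

End LimTools.

Ltac lim :=
  match goal with
  | H : filterlim ?f ?F (locally _) |- filterlim ?f ?F (locally _) => exact H
  | |- filterlim (fun x => ?c) _ (locally _) => apply L_const
  | |- filterlim (fun x => @?A x + @?B x) _ _ => eapply (L_plus A B); [lim|lim]
  | |- filterlim (fun x => @?A x - @?B x) _ _ => eapply (L_minus A B); [lim|lim]
  | |- filterlim (fun x => @?A x * @?B x) _ _ => eapply (L_mult A B); [lim|lim]
  | |- filterlim (fun x => @?A x / @?B x) _ _ => eapply (L_div A B); [lim|lim|]
  | |- filterlim (fun x => - @?A x) _ _ => eapply (L_opp A); lim
  | |- filterlim (fun x => / @?A x) _ _ => eapply (L_inv A); [lim|]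
  | |- filterlim (fun x => exp (@?A x)) _ _ => eapply (L_exp A); lim
  | |- filterlim (fun x => sqrt (@?A x)) _ _ => eapply (L_sqrt A); lim
  | |- filterlim (fun x => (@?A x) ^ ?n) _ _ => eapply (L_pow A _ n); lim
  end.


Lemma ar_ev (d : R) (P : R -> Prop) : 0 < d -> (forall x, 0 < x < d -> P x) -> at_right 0 P.
Proof.
intros Hd HP. exists (mkposreal d Hd). intros y Hy Hpos. apply HP. split; auto.
change (Rabs (y - 0) < d) in Hy. apply Rabs_def2 in Hy. lra.
Qed.

Lemma loc_ev (a b r : R) (P : R -> Prop) : a < r < b -> (forall x, a < x < b -> P x) -> locally r P.
Proof.
intros Hr HP. assert (Hd : 0 < Rmin (r - a) (b - r)) by (apply Rmin_pos; lra).
exists (mkposreal _ Hd). intros y Hy. apply HP.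
change (Rabs (y - r) < Rmin (r - a) (b - r)) in Hy. apply Rabs_def2 in Hy. destruct Hy as [H1 H2].
assert (Rmin (r - a) (b - r) <= r - a) by apply Rmin_l.
assert (Rmin (r - a) (b - r) <= b - r) by apply Rmin_r. lra.
Qed.

Lemma ar_id : filterlim (fun x => x) (at_right 0) (locally 0).
Proof. intros P [e He]. exists e. intros y Hy _. apply He. exact Hy. Qed.

Definition ext0 (f : R -> R) (l : R) (y : R) : R := if Rle_dec y 0 then l else f y.

Lemma ext0_cont (f : R -> R) (l Rb : R) :
  filterlim f (at_right 0) (locally l) ->
  (forall x, 0 < x < Rb -> continuous f x) ->
  forall y, y < Rb -> continuous (ext0 f l) y.
Proof.
intros Hl Hc y Hy.
destruct (Rlt_le_dec 0 y) as [Hp|Hn].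
- apply continuous_ext_loc with f.
  + apply (loc_ev 0 Rb y); [lra|]. intros x Hx. unfold ext0.
    destruct (Rle_dec x 0); [lra|reflexivity].
  + apply Hc; lra.
- destruct (Rle_lt_or_eq_dec _ _ Hn) as [Hneg|H0].
  + apply continuous_ext_loc with (fun _ => l).
    * apply (loc_ev (y - 1) 0 y); [lra|]. intros x Hx. unfold ext0.
      destruct (Rle_dec x 0); [reflexivity|lra].
    * apply continuous_const.
  + subst y. unfold continuous. unfold ext0 at 2.
    destruct (Rle_dec 0 0) as [_|Hf]; [|lra].
    apply filterlim_locally. intros eps.
    destruct (proj1 (filterlim_locally _ _) Hl eps) as [d Hd].
    exists d. intros x Hx. unfold ext0. destruct (Rle_dec x 0).
    * apply ball_center.
    * apply Hd; auto. lra.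
Qed.

Lemma FTC0 (f : R -> R) (l Rb : R) : 0 < Rb ->
  filterlim f (at_right 0) (locally l) ->
  (forall x, 0 < x < Rb -> continuous f x) ->
  (forall x, 0 < x < Rb -> ex_RInt f 0 x /\ is_derive (fun y => RInt f 0 y) x (f x)) /\
  filterlim (fun y => RInt f 0 y) (at_right 0) (locally 0).
Proof.
intros HRb Hl Hc.
set (G := ext0 f l).
assert (HG : forall y, y < Rb -> continuous G y) by (apply ext0_cont; auto).
assert (HexG : forall b, b < Rb -> ex_RInt G 0 b).
{ intros b Hb. apply (@ex_RInt_continuous R_CompleteNormedModule). intros z Hz. apply HG.
  assert (Rmax 0 b < Rb) by (apply Rmax_lub_lt; lra). lra. }
assert (Heq : forall b, 0 <= b -> RInt f 0 b = RInt G 0 b).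
{ intros b Hb. apply RInt_ext. intros x Hx. rewrite Rmin_left in Hx by lra.
  rewrite Rmax_right in Hx by lra. unfold G, ext0. destruct (Rle_dec x 0); [lra|reflexivity]. }
assert (HdG : forall x, x < Rb -> is_derive (fun y => RInt G 0 y) x (G x)).
{ intros x Hx. apply (is_derive_RInt G _ 0).
  - apply (loc_ev (x - 1) Rb x); [lra|]. intros b Hb. apply (@RInt_correct R_CompleteNormedModule). apply HexG. lra.
  - apply HG; auto. }
split.
- intros x Hx. split.
  + apply ex_RInt_ext with G.
    * intros y Hy. rewrite Rmin_left in Hy by lra. rewrite Rmax_right in Hy by lra.
      unfold G, ext0. destruct (Rle_dec y 0); [lra|reflexivity].
    * apply HexG; lra.
  + replace (f x) with (G x).
    * apply is_derive_ext_loc with (fun y => RInt G 0 y).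
      -- apply (loc_ev 0 Rb x); [lra|]. intros y Hy. symmetry. apply Heq. lra.
      -- apply HdG; lra.
    * unfold G, ext0. destruct (Rle_dec x 0); [lra|reflexivity].
- assert (Hc0 : continuous (fun y => RInt G 0 y) 0).
  { apply (@ex_derive_continuous R_AbsRing R_NormedModule (fun y => RInt G 0 y)). eexists. apply HdG.
    exact HRb. }
  unfold continuous in Hc0. rewrite RInt_point in Hc0.
  apply filterlim_ext_loc with (fun y => RInt G 0 y).
  + apply (ar_ev Rb); auto. intros x Hx. symmetry. apply Heq. lra.
  + eapply filterlim_filter_le_1; [|exact Hc0]. apply filter_le_within.
Qed.

Lemma Lim0_bound (f : R -> R) (d C : R) : 0 < d ->
  (forall x, 0 < x < d -> Rabs (f x) <= C * x) ->
  filterlim f (at_right 0) (locally 0).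
Proof.
intros Hd Hb. apply filterlim_locally. intros eps.
assert (HC : 0 < Rabs C + 1) by (generalize (Rabs_pos C); lra).
assert (He : 0 < Rmin d (eps / (Rabs C + 1))).
{ apply Rmin_pos; auto. apply Rdiv_lt_0_compat; auto. apply cond_pos. }
apply (ar_ev _ _ He). intros x Hx.
change (Rabs (f x - 0) < eps). rewrite Rminus_0_r.
assert (H1 : x < eps / (Rabs C + 1)).
{ generalize (Rmin_r d (eps / (Rabs C + 1))). lra. }
assert (H2 : x < d) by (generalize (Rmin_l d (eps / (Rabs C + 1))); lra).
eapply Rle_lt_trans. apply Hb. lra.
apply Rle_lt_trans with (Rabs C * x).
- apply Rmult_le_compat_r; [lra|apply Rle_abs].
- apply Rmult_lt_compat_r with (r := Rabs C + 1) in H1; [|lra].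
  unfold Rdiv in H1. rewrite Rmult_assoc, Rinv_l, Rmult_1_r in H1 by lra.
  destruct eps as [e He']. simpl in *. nra.
Qed.

Lemma Lim_bnd (f : R -> R) (l : R) : filterlim f (at_right 0) (locally l) ->
  exists d B, 0 < d /\ 0 <= B /\ forall x, 0 < x < d -> Rabs (f x) <= B.
Proof.
intros H. destruct (proj1 (filterlim_locally _ _) H (mkposreal 1 Rlt_0_1)) as [[d Hd] Hd'].
exists d, (Rabs l + 1). split; [exact Hd|]. split; [generalize (Rabs_pos l); lra|].
intros x Hx. assert (Hb : ball l 1 (f x)).
{ apply Hd'; [|lra]. change (Rabs (x - 0) < d). rewrite Rminus_0_r, Rabs_pos_eq; lra. }
change (Rabs (f x - l) < 1) in Hb.
generalize (Rabs_triang_inv (f x) l). lra.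
Qed.

Lemma mass_lim (rho : R -> R) (R0 l : R) : 0 < R0 -> filterlim rho (at_right 0) (locally l) ->
  (forall x, 0 < x < R0 -> continuous rho x) ->
  (forall x, 0 < x < R0 -> ex_RInt (fun s => 4*PI*s^2*rho s) 0 x /\ is_derive (mass rho) x (4*PI*x^2*rho x)) /\
  filterlim (mass rho) (at_right 0) (locally 0) /\
  filterlim (fun x => mass rho x / x^2) (at_right 0) (locally 0).
Proof.
intros HR Hl Hc.
assert (Hid := ar_id).
assert (Hf : filterlim (fun s => 4*PI*s^2*rho s) (at_right 0) (locally 0)).
{ eapply L_eq. lim. simpl; ring. }
assert (Hfc : forall x, 0 < x < R0 -> continuous (fun s => 4*PI*s^2*rho s) x).
{ intros x Hx. assert (Hr := Hc x Hx). unfold continuous in *.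
  assert (Hidx : filterlim (fun y : R => y) (locally x) (locally x)) by apply filterlim_id.
  eapply L_eq. lim. reflexivity. }
destruct (FTC0 _ _ _ HR Hf Hfc) as [H1 H2].
split; [exact H1|]. split; [exact H2|].
destruct (Lim_bnd _ _ Hl) as [d [B [Hd [HB Hbd]]]].
apply (Lim0_bound _ (Rmin d R0) (4*PI*B)). apply Rmin_pos; auto.
intros x Hx. assert (Hxd : x < d) by (generalize (Rmin_l d R0); lra).
assert (HxR : x < R0) by (generalize (Rmin_r d R0); lra).
assert (Hm : Rabs (mass rho x) <= (x - 0) * (4*PI*x^2*B)).
{ apply abs_RInt_le_const; [lra| apply H1; lra |].
  intros t Ht. destruct (Req_dec t 0) as [->|Ht0].
  - replace (4*PI*0^2*rho 0) with 0 by ring. rewrite Rabs_R0.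
    generalize PI_RGT_0; intros; apply Rmult_le_pos; [|lra]. nra.
  - rewrite !Rabs_mult. rewrite (Rabs_pos_eq 4) by lra. rewrite (Rabs_pos_eq PI) by (generalize PI_RGT_0; lra).
    rewrite Rabs_pos_eq by (apply pow2_ge_0).
    assert (Hr : Rabs (rho t) <= B) by (apply Hbd; lra).
    assert (t^2 <= x^2) by (simpl; nra).
    generalize PI_RGT_0; intros.
    apply Rmult_le_compat; try nra. apply Rabs_pos. }
unfold Rdiv. rewrite Rabs_mult, Rabs_inv, (Rabs_pos_eq (x^2)) by (apply pow2_ge_0).
apply Rmult_le_reg_r with (x^2). simpl; nra.
rewrite Rmult_assoc, Rinv_l by (simpl; nra). rewrite Rmult_1_r.
replace (4*PI*B*x*x^2) with ((x - 0) * (4*PI*x^2*B)) by ring. exact Hm.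
Qed.
Ltac side := repeat match goal with
  | |- _ /\ _ => split
  | |- _ * _ <> 0 => apply Rmult_integral_contrapositive_currified
  | |- ex_derive _ _ => eexists; eassumption
  | |- True => exact I
  end; try assumption; try lra.

Lemma stepA (M I K : R -> R) (Mr' Ir' Dp r : R) :
  r <> 0 -> 0 < 1 - 2*M r/r -> 1 + 4*PI*Dp*K r <> 0 ->
  is_derive M r Mr' -> is_derive I r Ir' ->
  is_derive K r (r*exp(-2*I r)/sqrt(1-2*M r/r)) ->
  is_derive (fun s => Dp*sqrt(1-2*M s/s)*exp(-2*I s)/(1+4*PI*Dp*K s)) r
    (Dp*sqrt(1-2*M r/r)*exp(-2*I r)/(1+4*PI*Dp*K r) *
      ((-2*Mr'/r + 2*M r/r^2)/(2*(1-2*M r/r)) - 2*Ir'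
       - 4*PI*(Dp*sqrt(1-2*M r/r)*exp(-2*I r)/(1+4*PI*Dp*K r))*r/(1-2*M r/r))).
Proof.
intros Hr Hu Hd HM HI HK.
auto_derive. all: try (solve [side]).
replace (Derive (fun x => M x) r) with Mr' by (symmetry; now apply is_derive_unique).
replace (Derive (fun x => I x) r) with Ir' by (symmetry; now apply is_derive_unique).
replace (Derive (fun x => K x) r) with (r*exp(-2*I r)/sqrt(1-2*M r/r)) by (symmetry; now apply is_derive_unique).
change (1 + - (2 * M r * / r)) with (1 - 2 * M r / r).
assert (HS : sqrt (1 - 2 * M r / r) * sqrt (1 - 2 * M r / r) = 1 - 2 * M r / r) by (apply sqrt_sqrt; lra).
assert (HS0 : 0 < sqrt (1 - 2 * M r / r)) by (apply sqrt_lt_R0; lra).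
set (S := sqrt (1 - 2 * M r / r)) in *.
rewrite <- HS. field. repeat split; try lra.
Qed.

Lemma stepG (M P Q : R -> R) (Mr' Pr' Qr' r : R) :
  r <> 0 -> 1 - 2*M r/r <> 0 ->
  is_derive M r Mr' -> is_derive P r Pr' -> is_derive Q r Qr' ->
  is_derive (fun s => (M s + 4*PI*P s*s^3)/(s^2*(1-2*M s/s)) + 4*PI*Q s*s/(1-2*M s/s)) r
   (((Mr' + 4*PI*((Pr'+Qr')*r^3 + 3*(P r+Q r)*r^2))*(r^2*(1-2*M r/r))
     - (M r + 4*PI*(P r+Q r)*r^3)*(2*r*(1-2*M r/r) + r^2*(-2*Mr'/r + 2*M r/r^2)))
     /(r^2*(1-2*M r/r))^2).
Proof.
intros Hr Hu HM HP HQ.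
auto_derive. all: try (solve [side]).
- replace (Derive (fun x => M x) r) with Mr' by (symmetry; now apply is_derive_unique).
  replace (Derive (fun x => P x) r) with Pr' by (symmetry; now apply is_derive_unique).
  replace (Derive (fun x => Q x) r) with Qr' by (symmetry; now apply is_derive_unique).
  change (1 + - (2 * M r * / r)) with (1 - 2 * M r / r).
  assert (r - 2*M r <> 0) by (intro H; apply Hu; replace (1 - 2*M r/r) with ((r - 2*M r)/r) by (field; auto); rewrite H; unfold Rdiv; ring).
  field. repeat split; auto.
Qed.

Lemma stepC (G J : R -> R) (Gr' d r : R) :
  r <> 0 -> 1 + r*G r <> 0 -> is_derive G r Gr' ->
  is_derive J r (G r*(1 - r*G r)/(1 + r*G r)) ->
  is_derive (fun s => 4*PI*s^3*d/(3*(1+s*G s)^2)*exp(2*J s)) r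
    (4*PI*r^3*d/(3*(1+r*G r)^2)*exp(2*J r) *
      (3/r - 2*(G r + r*Gr')/(1+r*G r) + 2*(G r*(1-r*G r)/(1+r*G r)))).
Proof.
intros Hr H1 HG HJ.
auto_derive. all: try (solve [side]).
- replace (Derive (fun x => G x) r) with Gr' by (symmetry; now apply is_derive_unique).
  replace (Derive (fun x => J x) r) with (G r*(1 - r*G r)/(1 + r*G r)) by (symmetry; now apply is_derive_unique).
  field. auto.
Qed.

Lemma stepD (P1 D M : R -> R) (rho G Gd Dd r : R) :
  r <> 0 -> 1 - 2*M r/r <> 0 -> 1 + r*G <> 0 -> 1 - 2*(M r + D r)/r <> 0 ->
  G = (M r + 4*PI*P1 r*r^3)/(r^2*(1-2*M r/r)) ->
  is_derive P1 r (-(rho + P1 r)*G) ->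
  is_derive M r (4*PI*r^2*rho) ->
  is_derive D r Dd ->
  Gd = ((4*PI*r^2*rho + 4*PI*((-(rho + P1 r)*G)*r^3 + 3*P1 r*r^2))*(r^2*(1-2*M r/r))
     - (M r + 4*PI*P1 r*r^3)*(2*r*(1-2*M r/r) + r^2*(-2*(4*PI*r^2*rho)/r + 2*M r/r^2)))
     /(r^2*(1-2*M r/r))^2 ->
  Dd = D r*(3/r - 2*(G + r*Gd)/(1+r*G) + 2*(G*(1-r*G)/(1+r*G))) ->
  is_derive (fun s => P1 s - D s/(4*PI*s^3)*((1+8*PI*P1 s*s^2)/(1-2*M s/s))) r
   (-( (4*PI*r^2*rho + Dd)/(4*PI*r^2) + (P1 r - D r/(4*PI*r^3)*((1+8*PI*P1 r*r^2)/(1-2*M r/r))))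
    * (((M r + D r) + 4*PI*(P1 r - D r/(4*PI*r^3)*((1+8*PI*P1 r*r^2)/(1-2*M r/r)))*r^3)
       /(r^2*(1-2*(M r + D r)/r)))).
Proof.
intros Hr Hu H1 Hm HG HP HM HD HGd HDd.
assert (HPI : PI <> 0) by (generalize PI_RGT_0; lra).
auto_derive. all: try (solve [side]).
replace (Derive (fun x => M x) r) with (4*PI*r^2*rho) by (symmetry; now apply is_derive_unique).
replace (Derive (fun x => P1 x) r) with (-(rho + P1 r)*G) by (symmetry; now apply is_derive_unique).
replace (Derive (fun x => D x) r) with Dd by (symmetry; now apply is_derive_unique).
assert (r - 2*M r <> 0) by (intro H; apply Hu; replace (1 - 2*M r/r) with ((r - 2*M r)/r) by (field; auto); rewrite H; unfold Rdiv; ring).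
assert (r - 2*(M r + D r) <> 0) by (intro H8; apply Hm; replace (1 - 2*(M r + D r)/r) with ((r - 2*(M r + D r))/r) by (field; auto); rewrite H8; unfold Rdiv; ring).
assert (r - 2*M r + (M r + 4*PI*P1 r*r^3) <> 0).
{ intro H9. apply H1.
  replace (1 + r*G) with ((r - 2*M r + (M r + 4*PI*P1 r*r^3))/(r - 2*M r)) by (rewrite HG; field; split; auto).
  rewrite H9. unfold Rdiv; ring. }
subst Dd Gd G.
change (1 + - (2 * M r * / r)) with (1 - 2 * M r / r).
field. repeat split; auto.
Qed.

Lemma is_derive_eq_val (f : R -> R) (x l l' : R) : is_derive f x l -> l = l' -> is_derive f x l'.
Proof. intros H ->; exact H. Qed.

Lemma stepB_eq (M P0 Q rho r : R) : r <> 0 -> 1 - 2*M/r <> 0 ->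
  (-(rho + P0)*((M + 4*PI*P0*r^3)/(r^2*(1-2*M/r))))
  + Q*((-2*(4*PI*r^2*rho)/r + 2*M/r^2)/(2*(1-2*M/r)) - 2*((M + 4*PI*P0*r^3)/(r^2*(1-2*M/r)))
       - 4*PI*Q*r/(1-2*M/r))
  = -(rho + (P0+Q))*((M + 4*PI*(P0+Q)*r^3)/(r^2*(1-2*M/r))).
Proof.
intros Hr Hu.
assert (r - 2*M <> 0) by (intro H8; apply Hu; replace (1 - 2*M/r) with ((r - 2*M)/r) by (field; auto); rewrite H8; unfold Rdiv; ring).
field. auto.
Qed.

Lemma mass_eq (rho F : R -> R) (R1 L : R) : 0 < R1 ->
  filterlim rho (at_right 0) (locally L) ->
  (forall x, 0 < x < R1 -> continuous rho x) ->
  (forall x, 0 < x < R1 -> is_derive F x (4*PI*x^2*rho x)) ->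
  filterlim F (at_right 0) (locally 0) ->
  forall x, 0 < x < R1 -> mass rho x = F x.
Proof.
intros HR Hl Hc HF HF0.
destruct (mass_lim rho R1 L HR Hl Hc) as [Hm [Hm0 _]].
set (H := fun y => mass rho y - F y).
assert (HD : forall y, 0 < y < R1 -> is_derive H y 0).
{ intros y Hy. eapply is_derive_eq_val. apply (@is_derive_minus R_AbsRing R_NormedModule).
  apply Hm; auto. apply HF; auto. simpl. unfold minus, plus, opp; simpl. ring. }
assert (Hconst : forall x y, 0 < y < x -> x < R1 -> H x = H y).
{ intros x y Hyx HxR.
  destruct (MVT_gen H y x (fun _ => 0)) as [c [Hc1 Hc2]].
  - intros z Hz. rewrite Rmin_left in Hz by lra. rewrite Rmax_right in Hz by lra. apply HD. lra.
  - intros z Hz. rewrite Rmin_left in Hz by lra. rewrite Rmax_right in Hz by lra.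
    apply continuity_pt_filterlim. apply (@ex_derive_continuous R_AbsRing R_NormedModule).
    eexists. apply HD. lra.
  - lra. }
assert (HH0 : filterlim H (at_right 0) (locally 0)).
{ unfold H. apply (L_eq _ (0 - 0)); [apply (L_minus (mass rho) F); auto | ring]. }
intros x Hx.
assert (HHx : filterlim H (at_right 0) (locally (H x))).
{ apply filterlim_ext_loc with (fun _ => H x).
  - apply (ar_ev x); [lra|]. intros y Hy. apply Hconst; lra.
  - apply filterlim_const. }
assert (H x = 0) by (apply (filterlim_locally_unique (F := at_right 0) H); auto).
unfold H in H0. lra.
Qed.

Definition GdF (rho0 p0 : R -> R) (Dp x : R) : R :=
  ((4*PI*x^2*rho0 x + 4*PI*((-(rho0 x + (p0 x + dp1 rho0 p0 Dp x))*g1 rho0 p0 Dp x)*x^3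
      + 3*(p0 x + dp1 rho0 p0 Dp x)*x^2))*(x^2*(1-2*m0 rho0 x/x))
   - (m0 rho0 x + 4*PI*(p0 x + dp1 rho0 p0 Dp x)*x^3)
     *(2*x*(1-2*m0 rho0 x/x) + x^2*(-2*(4*PI*x^2*rho0 x)/x + 2*m0 rho0 x/x^2)))
  /(x^2*(1-2*m0 rho0 x/x))^2.

Lemma unz (x M : R) : 0 < x -> 0 < 1 - 2*M/x -> 0 < x - 2*M.
Proof.
intros Hx Hu. replace (x - 2*M) with (x * (1 - 2*M/x)) by (field; lra).
apply Rmult_lt_0_compat; auto.
Qed.

Ltac fside := repeat split; try lra.
Ltac lsolve := eapply L_eq; [lim|]; rewrite ?Rminus_0_r, ?Rmult_0_r, ?Rplus_0_r, ?exp_0, ?sqrt_1;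
  try (solve [lra]); try (solve [field; fside]); try (solve [ring]).

Theorem theoremP3 (rho0 p0 : R -> R) (R0 : R) (Dp drhoc R1 : R) :
  TOV_regular rho0 p0 R0 ->
  0 < R1 <= R0 ->
  (forall r, 0 < r < R1 ->
     0 < 1 - 2 * m0 rho0 r / r /\
     0 < 1 + 4 * PI * Dp *
           RInt (fun s => s * exp (- 2 * I0 rho0 p0 s)
                          / sqrt (1 - 2 * m0 rho0 s / s)) 0 r /\
     0 < 1 + r * g1 rho0 p0 Dp r /\
     0 < 1 - 2 * (m0 rho0 r + dm rho0 p0 Dp drhoc r) / r) ->
  exists rho p : R -> R,
    TOV_regular rho p R1 /\
    rho 0 = rho0 0 + drhoc /\
    p 0 = p0 0 + (Dp - drhoc / 3) /\
    (forall r, 0 < r < R1 ->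
       mass rho r = m0 rho0 r + dm rho0 p0 Dp drhoc r /\
       rho r = Derive (fun s => m0 rho0 s + dm rho0 p0 Dp drhoc s) r
               / (4 * PI * r ^ 2) /\
       p r = p0 r + dp rho0 p0 Dp drhoc r).
Proof.
intros [HR0 [Hrho0l [Hp0l [Hcont [Hu0 Hp0d]]]]] [HR1 HR1R0] Hpos.
assert (HPI : 0 < PI) by apply PI_RGT_0.
assert (Hid := ar_id).
assert (Hidx : forall x : R, filterlim (fun y : R => y) (locally x) (locally x)) by (intros; apply filterlim_id).
destruct (mass_lim rho0 R0 (rho0 0) HR0 Hrho0l (fun x Hx => proj1 (Hcont x Hx))) as [HM1 [HM0 HM2]].
change (mass rho0) with (m0 rho0) in HM1, HM0, HM2.
assert (HMd : forall x, 0 < x < R1 -> is_derive (m0 rho0) x (4*PI*x^2*rho0 x)) by (intros; apply HM1; lra).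
assert (HMc : forall x, 0 < x < R1 -> filterlim (m0 rho0) (locally x) (locally (m0 rho0 x))).
{ intros x Hx. apply (@ex_derive_continuous R_AbsRing R_NormedModule). eexists; apply HMd; auto. }
assert (Hrc : forall x, 0 < x < R1 -> filterlim rho0 (locally x) (locally (rho0 x))) by (intros; apply Hcont; lra).
assert (Hpc : forall x, 0 < x < R1 -> filterlim p0 (locally x) (locally (p0 x))) by (intros; apply Hcont; lra).
assert (Hpd : forall x, 0 < x < R1 -> is_derive p0 x (-(rho0 x + p0 x) * g0 rho0 p0 x)) by (intros; apply Hp0d; lra).
assert (HA : filterlim (fun x => 2 * m0 rho0 x / x) (at_right 0) (locally 0)).
{ apply filterlim_ext_loc with (fun x => 2 * x * (m0 rho0 x / x^2)).
  - apply (ar_ev 1); [lra|]. intros x Hx. field. lra.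
  - lsolve. }
assert (Hg0l : filterlim (fun x => g0 rho0 p0 x) (at_right 0) (locally 0)).
{ apply filterlim_ext_loc with (fun x => (m0 rho0 x / x^2 + 4*PI*p0 x*x)/(1 - 2 * m0 rho0 x / x)).
  - apply (ar_ev R1); [lra|]. intros x Hx. unfold g0, gTOV. destruct (Hpos x Hx) as [Hu _].
    assert (Hu' := unz x _ (proj1 Hx) Hu). field; fside.
  - lsolve. }
assert (Hg0c : forall x, 0 < x < R1 -> continuous (g0 rho0 p0) x).
{ intros x Hx. assert (Hm := HMc x Hx). assert (Hp := Hpc x Hx). assert (Hi := Hidx x).
  destruct (Hpos x Hx) as [Hu _]. assert (Hu' := unz x _ (proj1 Hx) Hu).
  unfold continuous, g0, gTOV. lsolve.
  apply Rmult_integral_contrapositive_currified; [apply pow_nonzero; lra | lra]. }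
destruct (FTC0 _ _ _ HR1 Hg0l Hg0c) as [HI1 HI0].
change (fun y => RInt (g0 rho0 p0) 0 y) with (I0 rho0 p0) in HI1, HI0.
assert (HId : forall x, 0 < x < R1 -> is_derive (I0 rho0 p0) x (g0 rho0 p0 x)) by (intros; apply HI1; auto).
assert (HIc : forall x, 0 < x < R1 -> filterlim (I0 rho0 p0) (locally x) (locally (I0 rho0 p0 x))).
{ intros x Hx. apply (@ex_derive_continuous R_AbsRing R_NormedModule). eexists; apply HId; auto. }
set (Kf := fun s => s * exp (- 2 * I0 rho0 p0 s) / sqrt (1 - 2 * m0 rho0 s / s)).
assert (HKl : filterlim Kf (at_right 0) (locally 0)).
{ unfold Kf. lsolve. }
assert (HKc : forall x, 0 < x < R1 -> continuous Kf x).
{ intros x Hx. assert (Hm := HMc x Hx). assert (Hi := HIc x Hx). assert (Hi' := Hidx x).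
  destruct (Hpos x Hx) as [Hu _].
  unfold continuous, Kf. lsolve. apply Rgt_not_eq. apply sqrt_lt_R0. lra. }
destruct (FTC0 _ _ _ HR1 HKl HKc) as [HK1 HK0].
set (K := fun y => RInt Kf 0 y) in *.
assert (HKd : forall x, 0 < x < R1 -> is_derive K x (Kf x)) by (intros; apply HK1; auto).
assert (Hq : forall x, 0 < x < R1 -> is_derive (dp1 rho0 p0 Dp) x
   (dp1 rho0 p0 Dp x * ((-2*(4*PI*x^2*rho0 x)/x + 2*m0 rho0 x/x^2)/(2*(1-2*m0 rho0 x/x))
       - 2*g0 rho0 p0 x - 4*PI*dp1 rho0 p0 Dp x*x/(1-2*m0 rho0 x/x)))).
{ intros x Hx. destruct (Hpos x Hx) as [Hu [Hk _]].
  assert (Hk' : 1 + 4*PI*Dp*K x <> 0) by (unfold K, Kf; lra).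
  apply (stepA (m0 rho0) (I0 rho0 p0) K); auto; lra. }
assert (Hqc : forall x, 0 < x < R1 -> filterlim (dp1 rho0 p0 Dp) (locally x) (locally (dp1 rho0 p0 Dp x))).
{ intros x Hx. apply (@ex_derive_continuous R_AbsRing R_NormedModule). eexists; apply Hq; auto. }
assert (Hql : filterlim (fun x => dp1 rho0 p0 Dp x) (at_right 0) (locally Dp)).
{ unfold dp1. lsolve. }
assert (Hg1l : filterlim (fun x => g1 rho0 p0 Dp x) (at_right 0) (locally 0)).
{ unfold g1. lsolve. }
assert (Hg1d : forall x, 0 < x < R1 -> is_derive (g1 rho0 p0 Dp) x (GdF rho0 p0 Dp x)).
{ intros x Hx. destruct (Hpos x Hx) as [Hu _]. assert (Hu' := unz x _ (proj1 Hx) Hu).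
  eapply is_derive_eq_val.
  - apply (stepG (m0 rho0) p0 (dp1 rho0 p0 Dp)); try lra.
    + apply HMd; auto. + apply Hpd; auto. + apply Hq; auto.
  - unfold GdF, g1, g0, gTOV. field. fside. }
assert (Hg1c : forall x, 0 < x < R1 -> filterlim (g1 rho0 p0 Dp) (locally x) (locally (g1 rho0 p0 Dp x))).
{ intros x Hx. apply (@ex_derive_continuous R_AbsRing R_NormedModule). eexists; apply Hg1d; auto. }
set (Jf := fun s => g1 rho0 p0 Dp s * (1 - s * g1 rho0 p0 Dp s) / (1 + s * g1 rho0 p0 Dp s)).
assert (HJl : filterlim Jf (at_right 0) (locally 0)).
{ unfold Jf. lsolve. }
assert (HJc : forall x, 0 < x < R1 -> continuous Jf x).
{ intros x Hx. assert (Hg := Hg1c x Hx). assert (Hi' := Hidx x).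
  destruct (Hpos x Hx) as [_ [_ [Hg1p _]]].
  unfold continuous, Jf. lsolve. }
destruct (FTC0 _ _ _ HR1 HJl HJc) as [HJ1 HJ0].
set (J := fun y => RInt Jf 0 y) in *.
assert (HJd : forall x, 0 < x < R1 -> is_derive J x (Jf x)) by (intros; apply HJ1; auto).
assert (HJc' : forall x, 0 < x < R1 -> filterlim J (locally x) (locally (J x))).
{ intros x Hx. apply (@ex_derive_continuous R_AbsRing R_NormedModule). eexists; apply HJd; auto. }
set (Dd := fun x => dm rho0 p0 Dp drhoc x * (3/x - 2*(g1 rho0 p0 Dp x + x*GdF rho0 p0 Dp x)/(1+x*g1 rho0 p0 Dp x)
     + 2*(g1 rho0 p0 Dp x*(1-x*g1 rho0 p0 Dp x)/(1+x*g1 rho0 p0 Dp x)))).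
assert (Hdmd : forall x, 0 < x < R1 -> is_derive (dm rho0 p0 Dp drhoc) x (Dd x)).
{ intros x Hx. destruct (Hpos x Hx) as [_ [_ [Hg1p _]]].
  apply (stepC (g1 rho0 p0 Dp) J); try lra.
  - apply Hg1d; auto.
  - apply HJd; auto. }
assert (Hdmc : forall x, 0 < x < R1 -> filterlim (dm rho0 p0 Dp drhoc) (locally x) (locally (dm rho0 p0 Dp drhoc x))).
{ intros x Hx. apply (@ex_derive_continuous R_AbsRing R_NormedModule). eexists; apply Hdmd; auto. }
assert (Hnz : forall x, 0 < x -> x ^ 2 <> 0) by (intros; apply pow_nonzero; lra).
assert (HGc : forall x, 0 < x < R1 -> filterlim (GdF rho0 p0 Dp) (locally x) (locally (GdF rho0 p0 Dp x))).
{ intros x Hx. assert (Hm := HMc x Hx). assert (Hp := Hpc x Hx). assert (Hi := Hidx x).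
  assert (Hr := Hrc x Hx). assert (Hq' := Hqc x Hx). assert (Hg := Hg1c x Hx).
  destruct (Hpos x Hx) as [Hu _]. assert (Hx2 := Hnz x (proj1 Hx)).
  unfold GdF. lsolve; try apply pow_nonzero; apply Rmult_integral_contrapositive_currified; lra. }
assert (HGl : filterlim (fun x => x^2 * GdF rho0 p0 Dp x) (at_right 0) (locally 0)).
{ apply filterlim_ext_loc with (fun x => x^2*(4*PI*rho0 x + 4*PI*(-(rho0 x + (p0 x + dp1 rho0 p0 Dp x))*g1 rho0 p0 Dp x*x
     + 3*(p0 x + dp1 rho0 p0 Dp x)))/(1-2*m0 rho0 x/x)
    - (m0 rho0 x/x^2 + 4*PI*(p0 x+dp1 rho0 p0 Dp x)*x)*(2*x*(1-2*m0 rho0 x/x)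
      + x^2*(-8*PI*x*rho0 x + 2*(m0 rho0 x/x^2)))/(1-2*m0 rho0 x/x)^2).
  - apply (ar_ev R1); [lra|]. intros x Hx. destruct (Hpos x Hx) as [Hu _].
    assert (Hu' := unz x _ (proj1 Hx) Hu). unfold GdF. field. fside.
  - lsolve. }
assert (Hdm_eq : forall x, dm rho0 p0 Dp drhoc x = 4*PI*x^3*drhoc/(3*(1+x*g1 rho0 p0 Dp x)^2)*exp(2*J x))
  by (intros; reflexivity).
assert (HFd : forall x, 0 < x < R1 -> is_derive (fun s => m0 rho0 s + dm rho0 p0 Dp drhoc s) x (4*PI*x^2*rho0 x + Dd x)).
{ intros x Hx. apply (@is_derive_plus R_AbsRing R_NormedModule); [apply HMd|apply Hdmd]; auto. }
assert (HDer : forall x, 0 < x < R1 -> Derive (fun s => m0 rho0 s + dm rho0 p0 Dp drhoc s) x = 4*PI*x^2*rho0 x + Dd x)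
  by (intros; apply is_derive_unique; auto).
assert (HP1 : forall x, 0 < x < R1 -> is_derive (fun s => p0 s + dp1 rho0 p0 Dp s) x
                 (-(rho0 x + (p0 x + dp1 rho0 p0 Dp x)) * g1 rho0 p0 Dp x)).
{ intros x Hx. destruct (Hpos x Hx) as [Hu _]. assert (Hu' := unz x _ (proj1 Hx) Hu).
  eapply is_derive_eq_val.
  - apply (@is_derive_plus R_AbsRing R_NormedModule); [apply Hpd|apply Hq]; auto.
  - unfold g1, g0, gTOV. simpl. unfold plus; simpl. field. fside. }
set (rho := fun r => if Rle_dec r 0 then rho0 0 + drhoc
                     else Derive (fun s => m0 rho0 s + dm rho0 p0 Dp drhoc s) r / (4 * PI * r ^ 2)).
set (p := fun r => if Rle_dec r 0 then p0 0 + (Dp - drhoc / 3) else p0 r + dp rho0 p0 Dp drhoc r).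
assert (Hrho_eq : forall x, 0 < x < R1 -> rho x = (4*PI*x^2*rho0 x + Dd x)/(4*PI*x^2)).
{ intros x Hx. unfold rho. destruct (Rle_dec x 0); [lra|]. rewrite HDer; auto. }
assert (Hrhol : filterlim rho (at_right 0) (locally (rho0 0 + drhoc))).
{ apply filterlim_ext_loc with (fun x => rho0 x + drhoc/(3*(1+x*g1 rho0 p0 Dp x)^2)*exp(2*J x)
     *(3 - 2*(x*g1 rho0 p0 Dp x + x^2*GdF rho0 p0 Dp x)/(1+x*g1 rho0 p0 Dp x) + 2*(x*Jf x))).
  - apply (ar_ev R1); [lra|]. intros x Hx. destruct (Hpos x Hx) as [Hu [_ [Hg1p _]]].
    rewrite Hrho_eq; auto. unfold Dd, Jf. rewrite Hdm_eq. field. fside.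
  - lsolve. }
assert (Hrhoc : forall x, 0 < x < R1 -> continuous rho x).
{ intros x Hx. apply continuous_ext_loc with (fun s => (4*PI*s^2*rho0 s + Dd s)/(4*PI*s^2)).
  - apply (loc_ev 0 R1 x); auto. intros y Hy. symmetry. apply Hrho_eq; auto.
  - assert (Hm := HMc x Hx). assert (Hp := Hpc x Hx). assert (Hi := Hidx x).
    assert (Hr := Hrc x Hx). assert (Hg := Hg1c x Hx). assert (HG := HGc x Hx). assert (Hd := Hdmc x Hx).
    destruct (Hpos x Hx) as [Hu [_ [Hg1p _]]]. assert (Hx2 := Hnz x (proj1 Hx)).
    unfold continuous, Dd. lsolve; try reflexivity; apply Rmult_integral_contrapositive_currified; lra. }
assert (Hp_eq : forall x, 0 < x < R1 -> p x = p0 x + dp1 rho0 p0 Dp x - (drhoc/(3*(1+x*g1 rho0 p0 Dp x)^2)*exp(2*J x))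
     *((1+8*PI*(p0 x+dp1 rho0 p0 Dp x)*x^2)/(1-2*m0 rho0 x/x))).
{ intros x Hx. destruct (Hpos x Hx) as [Hu [_ [Hg1p _]]]. assert (Hu' := unz x _ (proj1 Hx) Hu).
  unfold p. destruct (Rle_dec x 0); [lra|]. unfold dp. rewrite Hdm_eq. field. fside. }
assert (Hpl : filterlim p (at_right 0) (locally (p0 0 + (Dp - drhoc / 3)))).
{ apply filterlim_ext_loc with (fun x => p0 x + dp1 rho0 p0 Dp x - (drhoc/(3*(1+x*g1 rho0 p0 Dp x)^2)*exp(2*J x))
     *((1+8*PI*(p0 x+dp1 rho0 p0 Dp x)*x^2)/(1-2*m0 rho0 x/x))).
  - apply (ar_ev R1); [lra|]. intros x Hx. symmetry. apply Hp_eq; auto.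
  - lsolve. }
assert (Hmass : forall x, 0 < x < R1 -> mass rho x = m0 rho0 x + dm rho0 p0 Dp drhoc x).
{ apply (mass_eq rho (fun s => m0 rho0 s + dm rho0 p0 Dp drhoc s) R1 (rho0 0 + drhoc)); auto.
  - intros x Hx. eapply is_derive_eq_val; [apply HFd; auto|].
    rewrite Hrho_eq; auto. field. lra.
  - apply filterlim_ext with (fun x => m0 rho0 x + 4*PI*x^3*drhoc/(3*(1+x*g1 rho0 p0 Dp x)^2)*exp(2*J x)).
    + intros x. rewrite Hdm_eq. reflexivity.
    + lsolve. }
assert (Hpv : forall x, 0 < x < R1 -> p x = (p0 x + dp1 rho0 p0 Dp x) - dm rho0 p0 Dp drhoc x/(4*PI*x^3)
          *((1+8*PI*(p0 x + dp1 rho0 p0 Dp x)*x^2)/(1-2*m0 rho0 x/x))).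
{ intros x Hx. unfold p. destruct (Rle_dec x 0); [lra|]. unfold dp. ring. }
assert (HpD : forall x, 0 < x < R1 -> is_derive p x (-(rho x + p x) * gTOV (mass rho) p x)).
{ intros x Hx. destruct (Hpos x Hx) as [Hu [_ [Hg1p Hm]]].
  apply is_derive_ext_loc with (fun s => (p0 s + dp1 rho0 p0 Dp s) - dm rho0 p0 Dp drhoc s/(4*PI*s^3)
          *((1+8*PI*(p0 s + dp1 rho0 p0 Dp s)*s^2)/(1-2*m0 rho0 s/s))).
  - apply (loc_ev 0 R1 x); auto. intros y Hy. symmetry. apply Hpv; auto.
  - eapply is_derive_eq_val.
    + apply (stepD (fun s => p0 s + dp1 rho0 p0 Dp s) (dm rho0 p0 Dp drhoc) (m0 rho0)
              (rho0 x) (g1 rho0 p0 Dp x) (GdF rho0 p0 Dp x) (Dd x) x); try lra.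
      * assert (Hu' := unz x _ (proj1 Hx) Hu). unfold g1, g0, gTOV. field. fside.
      * apply HP1; auto.
      * apply HMd; auto.
      * apply Hdmd; auto.
      * reflexivity.
      * reflexivity.
    + unfold gTOV. rewrite Hmass, Hrho_eq, (Hpv x); auto. }
assert (Hr0 : rho 0 = rho0 0 + drhoc) by (unfold rho; destruct (Rle_dec 0 0); lra).
assert (Hp0 : p 0 = p0 0 + (Dp - drhoc / 3)) by (unfold p; destruct (Rle_dec 0 0); lra).
exists rho, p. split; [|split; [exact Hr0|split; [exact Hp0|]]].
- split; [exact HR1|]. split; [rewrite Hr0; exact Hrhol|]. split; [rewrite Hp0; exact Hpl|].
  split; [|split].
  + intros r Hr. split; [apply Hrhoc; auto|].
    apply (@ex_derive_continuous R_AbsRing R_NormedModule). eexists; apply HpD; auto.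
  + intros r Hr. rewrite Hmass by auto. apply Hpos; auto.
  + exact HpD.
- intros r Hr. split; [apply Hmass; auto|]. split.
  + unfold rho. destruct (Rle_dec r 0); [lra|reflexivity].
  + unfold p. destruct (Rle_dec r 0); [lra|reflexivity].
Qed.
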